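(* Let $a<c<b<d$ be integers, so that the finite arcs $(a,b)$ and $(c,d)$ cross. Then there are non-split short exact sequences in $\mathcal{C}_2$ \[ 0\to(a,b)\xrightarrow{f}(c,b)\oplus(a,d)\xrightarrow{g}(c,d)\to0,\qquad 0\to(c,d)\xrightarrow{f'}(a,c)\oplus(b,d)\xrightarrow{g'}(a,b)\to0. \]
   Context: Let $R=\mathbb{C}[x,y]/(x^2)$, graded with $\deg x=1$, $\deg y=-1$; $M(j)_n=M_{j+n}$. $\mathcal{C}_2$ is the exact category of finitely generated $\mathbb{Z}$-graded maximal Cohen–Macaulay $R$-modules with degree-preserving morphisms. An arc is a pair $(a,b)$ with $a\in\mathbb{Z}\cup\{-\infty\}$, $b\in\mathbb{Z}$, $a<b$; a finite arc $(a,b)$ ($a\in\mathbb{Z}$) denotes the module $(x,y^{b-a-1})(1-b)$ (where $(x,y^0)=R$), and an infinite arc $(-\infty,b)$ denotes $\mathbb{C}[y](-b)=(R/(x))(-b)$. *)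

(* Defs.v *)
From HB Require Import structures.
From mathcomp Require Import all_boot all_order all_algebra.
From mathcomp Require Import complex.
From mathcomp Require Import Rstruct.

Set Implicit Arguments.
Unset Strict Implicit.
Unset Printing Implicit Defensive.

Import Order.TTheory GRing.Theory Num.Theory.
Local Open Scope ring_scope.

Definition CC : fieldType := (Rdefinitions.R)[i].

(* Graded modules over R = C[x,y]/(x^2), deg x = 1, deg y = -1.              *)
(* A Z-graded R-module with finite-dimensional homogeneous pieces is given   *)
(* by: dimensions dim n of the pieces M_n (identified with row vectors of    *)
(* length dim n), the action of x : M_n -> M_(n+1) as the matrix X n and the *)
(* action of y : M_(n+1) -> M_n as the matrix Y n (row-vector convention:    *)
(* v |-> v *m X n).                                                          *)
Record grmod (F : fieldType) := GrMod {
  gdim : int -> nat;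
  gX : forall n : int, 'M[F]_(gdim n, gdim (n + 1));
  gY : forall n : int, 'M[F]_(gdim (n + 1), gdim n)
}.

Section GradedModules.
Variable F : fieldType.

(* Module axioms: x^2 = 0 and xy = yx (on every homogeneous piece). *)
Definition grmod_axioms (M : grmod F) : Prop :=
  forall n : int, gX M n *m gX M (n + 1) = 0 /\
                  gY M n *m gX M n = gX M (n + 1) *m gY M (n + 1).

Definition grhom (M N : grmod F) := forall n : int, 'M[F]_(gdim M n, gdim N n).

Definition is_grhom (M N : grmod F) (f : grhom M N) : Prop :=
  forall n : int, f n *m gX N n = gX M n *m f (n + 1) /\
                  gY M n *m f n = f (n + 1) *m gY N n.

Definition grsum (M N : grmod F) : grmod F :=
  @GrMod F (fun n => (gdim M n + gdim N n)%N)
    (fun n => block_mx (gX M n) 0 0 (gX N n))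
    (fun n => block_mx (gY M n) 0 0 (gY N n)).

Definition short_exact (A B C : grmod F) (f : grhom A B) (g : grhom B C) : Prop :=
  is_grhom f /\ is_grhom g /\
  forall n : int,
    [/\ row_free (f n), row_full (g n), f n *m g n = 0 & (kermx (g n) <= f n)%MS].

Definition splits (A B C : grmod F) (f : grhom A B) (g : grhom B C) : Prop :=
  exists s : grhom C B, is_grhom s /\ forall n : int, s n *m g n = 1%:M.

(* The graded module (x, y^k)(j) (with (x, y^0) = R).                       *)
(* The degree-m piece of the ideal I = (x, y^k) of R has basis              *)
(*   index 0 : x y^(1-m)   (present iff m <= 1),                            *)
(*   index 1 : y^(-m)      (present iff m <= -k);                           *)
(* the twist (j) gives M_n = I_(j+n).                                      *)
(* x sends y^(-m) to x y^(1-(m+1)) and kills x y^(1-m);                     *)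
(* y sends x y^(1-(m+1)) to x y^(1-m) and y^(-(m+1)) to y^(-m).             *)
Definition ideal_dim (k : nat) (j n : int) : nat :=
  addn (nat_of_bool (j + n <= 1)) (nat_of_bool (j + n <= - (k%:Z))).

Definition ideal_mod (k : nat) (j : int) : grmod F :=
  @GrMod F (ideal_dim k j)
    (fun n => \matrix_(i, l) ((i == 1%N :> nat) && (l == 0%N :> nat))%:R)
    (fun n => \matrix_(i, l) (i == l :> nat)%:R).

Definition farc (a b : int) : grmod F := ideal_mod (absz (b - a - 1)%R) (1 - b)%R.

End GradedModules.

(* Main.v *)
Require Import Defs.
From HB Require Import structures.
From mathcomp Require Import all_boot all_order all_algebra.
From mathcomp Require Import complex Rstruct zify.
Import Order.TTheory GRing.Theory Num.Theory.
Local Open Scope ring_scope.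

Notation FA := (@farc CC).

Lemma gdim_farc (a b n : int) : a < b -> gdim (FA a b) n = addn (n <= b)%R (n <= a)%R.
Proof.
move=> ab; rewrite /= /ideal_dim.
have -> : (1 - b + n <= 1) = (n <= b) by lia.
have -> : (1 - b + n <= - (absz (b - a - 1)%R)%:Z) = (n <= a).
  have -> : (absz (b - a - 1)%R)%:Z = b - a - 1 by lia.
  lia.
by [].
Qed.

Definition pm m n (P : nat -> nat -> bool) : 'M[CC]_(m, n) :=
  \matrix_(i < m, l < n) (P i l)%:R.
Arguments pm {m n} P.

Definition peq (i l : nat) := i == l.
Definition pYX (i l : nat) := (i == 1%N) && (l == 0%N).

Lemma sum_pick p (P : nat -> bool) (G : nat -> CC) j :
  (forall k, P k -> k = j) ->
  \sum_(k < p) (P k)%:R * G k = ((j < p)%N && P j)%:R * G j.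
Proof.
move=> H; case: (ltnP j p) => hj.
  rewrite (bigD1 (Ordinal hj)) //= big1 ?addr0 // => k /eqP hk.
  case Pk: (P k); last by rewrite mul0r.
  by exfalso; apply: hk; apply: val_inj; rewrite /= (H _ Pk).
rewrite big1 /= ?mul0r // => k _.
case Pk: (P k); last by rewrite mul0r.
by move: (ltn_ord k); rewrite (H _ Pk) ltnNge hj.
Qed.

Lemma pm_mul m p q (P Q : nat -> nat -> bool) (f : nat -> nat) :
  (forall i k, P i k -> k = f i) ->
  (pm P : 'M_(m, p)) *m (pm Q : 'M_(p, q)) =
  pm (fun i l => [&& (f i < p)%N, P i (f i) & Q (f i) l]).
Proof.
move=> H; apply/matrixP => i l; rewrite !mxE.
under eq_bigr => k _ do rewrite !mxE.
rewrite (@sum_pick _ (P i) (fun k => (Q k l)%:R) (f i) (@H i)).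
by rewrite -natrM mulnb andbA.
Qed.

Lemma pm_eq m n (P Q : nat -> nat -> bool) :
  (forall i l, (i < m)%N -> (l < n)%N -> P i l = Q i l) -> (pm P : 'M_(m, n)) = pm Q.
Proof. by move=> H; apply/matrixP => i l; rewrite !mxE H. Qed.
Arguments pm_mul {m p q P Q f}.

Lemma gXE a b n : gX (FA a b) n = pm pYX. Proof. by []. Qed.
Lemma gYE a b n : gY (FA a b) n = pm peq. Proof. by []. Qed.

Lemma peqF i k : peq i k -> k = i. Proof. by move/eqP. Qed.
Lemma pYXF i k : pYX i k -> k = 0%N. Proof. by case/andP=> _ /eqP. Qed.

Lemma hom_id (a1 b1 a2 b2 : int) : a1 < b1 -> a2 < b2 -> a1 <= a2 -> b1 <= b2 ->
  is_grhom (M := FA a1 b1) (N := FA a2 b2) (fun n => pm peq).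
Proof.
move=> h1 h2 h3 h4 n; rewrite !gXE !gYE; split.
  rewrite (pm_mul peqF) (pm_mul pYXF); apply: pm_eq => i l.
  rewrite !gdim_farc // /peq /pYX /=; lia.
rewrite (pm_mul peqF) (pm_mul peqF); apply: pm_eq => i l.
rewrite !gdim_farc // /peq /pYX /=; lia.
Qed.

Lemma hom_YX (a1 b1 a2 b2 : int) : a1 < b1 -> a2 < b2 -> a1 <= b2 ->
  is_grhom (M := FA a1 b1) (N := FA a2 b2) (fun n => pm pYX).
Proof.
move=> h1 h2 h3 n; rewrite !gXE !gYE; split.
  rewrite (pm_mul pYXF) (pm_mul pYXF); apply: pm_eq => i l.
  rewrite !gdim_farc // /peq /pYX /=; lia.
rewrite (pm_mul peqF) (pm_mul pYXF); apply: pm_eq => i l.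
rewrite !gdim_farc // /peq /pYX /=; lia.
Qed.

Lemma pm_eq0 m n (P : nat -> nat -> bool) :
  (forall i l, (i < m)%N -> (l < n)%N -> P i l = false) -> (pm P : 'M_(m, n)) = 0.
Proof. by move=> H; apply/matrixP => i l; rewrite !mxE H. Qed.

Lemma pm_one n : (pm peq : 'M_n) = 1%:M.
Proof. by apply/matrixP => i l; rewrite !mxE. Qed.

Lemma pm_add m n (P Q : nat -> nat -> bool) :
  (forall i l, ~~ (P i l && Q i l)) ->
  (pm P : 'M_(m, n)) + pm Q = pm (fun i l => P i l || Q i l).
Proof.
move=> H; apply/matrixP => i l; rewrite !mxE.
by move: (H i l); case: (P i l); case: (Q i l); rewrite //= ?addr0 ?add0r.
Qed.

Lemma hom_row (A B C : grmod CC) (f1 : grhom A B) (f2 : grhom A C) :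
  is_grhom f1 -> is_grhom f2 ->
  is_grhom (M := A) (N := grsum B C) (fun n => row_mx (f1 n) (f2 n)).
Proof.
move=> h1 h2 n /=; case: (h1 n) => [e1 e2]; case: (h2 n) => [e3 e4].
rewrite !mul_row_block !mul_mx_row !mulmx0 !addr0 !add0r.
by rewrite e1 e2 e3 e4.
Qed.

Lemma hom_col (A B C : grmod CC) (g1 : grhom A C) (g2 : grhom B C) :
  is_grhom g1 -> is_grhom g2 ->
  is_grhom (M := grsum A B) (N := C) (fun n => col_mx (g1 n) (g2 n)).
Proof.
move=> h1 h2 n /=; case: (h1 n) => [e1 e2]; case: (h2 n) => [e3 e4].
rewrite !mul_block_col !mul_col_mx !mul0mx !addr0 !add0r.
by rewrite e1 e2 e3 e4.
Qed.

Lemma hom_opp (A B : grmod CC) (g : grhom A B) :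
  is_grhom g -> is_grhom (M := A) (N := B) (fun n => - g n).
Proof.
move=> h n; case: (h n) => [e1 e2].
by rewrite mulNmx mulmxN e1 mulNmx mulmxN e2.
Qed.

Lemma ses_of (A B C : grmod CC) (f : grhom A B) (g : grhom B C) :
  is_grhom f -> is_grhom g ->
  (forall n, (gdim A n + gdim C n)%N = gdim B n) ->
  (forall n, exists h, f n *m h = 1%:M) ->
  (forall n, exists h, h *m g n = 1%:M) ->
  (forall n, f n *m g n = 0) -> short_exact f g.
Proof.
move=> hf hg hd hr hl h0; split; [done|split; [done|]] => n.
have rf : row_free (f n) by apply/row_freeP.
have rg : row_full (g n) by apply/row_fullP.
have sub : (f n <= kermx (g n))%MS by apply/sub_kermxP.
split => //; rewrite -((mxrank_leqif_sup sub).2) mxrank_ker (eqP rf) (eqP rg).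
by rewrite -(hd n) addnK.
Qed.

Lemma gdim_sum (M N : grmod CC) n : gdim (grsum M N) n = (gdim M n + gdim N n)%N.
Proof. by []. Qed.

Definition p11 (i l : nat) := (i == 1%N) && (l == 1%N).
Definition p00 (i l : nat) := (i == 0%N) && (l == 0%N).
Definition p01 (i l : nat) := (i == 0%N) && (l == 1%N).
Lemma p11F i k : p11 i k -> k = 1%N. Proof. by case/andP=> _ /eqP. Qed.
Lemma p00F i k : p00 i k -> k = 0%N. Proof. by case/andP=> _ /eqP. Qed.
Lemma p01F i k : p01 i k -> k = 1%N. Proof. by case/andP=> _ /eqP. Qed.

Ltac solve_pm := apply: pm_eq => ? ? ; rewrite !gdim_farc // /peq /pYX /p11 /p00 /p01 /=; lia.

Lemma ses1 (a b c d : int) : a < c -> c < b -> b < d ->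
  short_exact (A := FA a b) (B := grsum (FA c b) (FA a d)) (C := FA c d)
    (fun n => row_mx (pm peq) (pm peq)) (fun n => col_mx (pm peq) (- pm peq)).
Proof.
move=> ac cb bd.
have ab : a < b by lia. have ad : a < d by lia. have cd : c < d by lia.
apply: ses_of.
- by apply: hom_row; apply: hom_id => //; lia.
- by apply: hom_col; [|apply: hom_opp]; apply: hom_id => //; lia.
- by move=> n; rewrite gdim_sum !gdim_farc //; lia.
- move=> n; exists (col_mx (pm peq) 0); rewrite mul_row_col mulmx0 addr0.
  by rewrite (pm_mul peqF) -pm_one; solve_pm.
- move=> n; exists (row_mx (pm p11) (- pm p00)).
  rewrite mul_row_col mulNmx mulmxN opprK (pm_mul p11F) (pm_mul p00F) pm_add.
    by rewrite -pm_one; solve_pm.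
  by move=> i l; rewrite /p11 /p00; lia.
- move=> n; rewrite mul_row_col mulmxN (pm_mul peqF) (pm_mul peqF); apply/eqP; rewrite subr_eq0.
  by apply/eqP; solve_pm.
Qed.

Lemma ses2 (a b c d : int) : a < c -> c < b -> b < d ->
  short_exact (A := FA c d) (B := grsum (FA a c) (FA b d)) (C := FA a b)
    (fun n => row_mx (pm pYX) (pm peq)) (fun n => col_mx (pm peq) (- pm pYX)).
Proof.
move=> ac cb bd.
have ab : a < b by lia. have ad : a < d by lia. have cd : c < d by lia.
apply: ses_of.
- by apply: hom_row; [apply: hom_YX|apply: hom_id] => //; lia.
- by apply: hom_col; [|apply: hom_opp]; [apply: hom_id|apply: hom_YX] => //; lia.
- by move=> n; rewrite gdim_sum !gdim_farc //; lia.
- move=> n; exists (col_mx 0 (pm peq)); rewrite mul_row_col mulmx0 add0r.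
  by rewrite (pm_mul peqF) -pm_one; solve_pm.
- move=> n; exists (row_mx (pm p11) (- pm p01)).
  rewrite mul_row_col mulNmx mulmxN opprK (pm_mul p11F) (pm_mul p01F) pm_add.
    by rewrite -pm_one; solve_pm.
  by move=> i l; rewrite /p11 /p01; lia.
- move=> n; rewrite mul_row_col mulmxN (pm_mul pYXF) (pm_mul peqF); apply/eqP; rewrite subr_eq0.
  by apply/eqP; solve_pm.
Qed.

Lemma gX_sum (M N : grmod CC) n : gX (grsum M N) n = block_mx (gX M n) 0 0 (gX N n).
Proof. by []. Qed.
Lemma gY_sum (M N : grmod CC) n : gY (grsum M N) n = block_mx (gY M n) 0 0 (gY N n).
Proof. by []. Qed.

Definition r0 (i l : nat) := l == 0%N.
Definition r1 (i l : nat) := l == 1%N.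
Definition c0 (i l : nat) := i == 0%N.
Definition c1 (i l : nat) := i == 1%N.
Lemma r0F i k : r0 i k -> k = 0%N. Proof. by move/eqP. Qed.
Lemma r1F i k : r1 i k -> k = 1%N. Proof. by move/eqP. Qed.

Ltac solve_pm0 := apply: pm_eq0 => ? ? ; rewrite !gdim_farc // /peq /pYX /r0 /r1 /c0 /c1 /=; lia.
Ltac solve_pm' := apply: pm_eq => ? ? ; rewrite !gdim_farc // /peq /pYX /r0 /r1 /c0 /c1 /=; lia.

Lemma pm_true_neq0 : (pm (fun _ _ => true) : 'M[CC]_(1, 1)) <> 0.
Proof.
move/matrixP => /(_ ord0 ord0); rewrite !mxE /=; apply/eqP; exact: oner_neq0.
Qed.

Lemma nsplit1 (a b c d : int) : a < c -> c < b -> b < d ->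
  ~ splits (A := FA a b) (B := grsum (FA c b) (FA a d)) (C := FA c d)
    (fun n => row_mx (pm peq) (pm peq)) (fun n => col_mx (pm peq) (- pm peq)).
Proof.
move=> ac cb bd [s [hs hsg]].
have ab : a < b by lia. have ad : a < d by lia. have cd : c < d by lia.
pose v n := (pm r0 : 'M_(1, gdim (FA c d) n)) *m s n *m
   col_mx (pm c0 : 'M_(gdim (FA c b) n, 1)) (0 : 'M_(gdim (FA a d) n, 1)).
have step n : n + 1 <= d -> v n = v (n + 1).
  move=> hn; rewrite /v.
  have -> : (pm r0 : 'M_(1, gdim (FA c d) n)) = pm r0 *m gY (FA c d) n.
    rewrite gYE (pm_mul r0F); solve_pm'.
  rewrite -!mulmxA (mulmxA (gY _ n)) (proj2 (hs n)) -!mulmxA.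
  congr (_ *m (_ *m _)).
  rewrite gY_sum mul_block_col !mulmx0 !mul0mx !addr0 gYE (pm_mul peqF); congr col_mx.
  solve_pm'.
have base : v (b + 1) = 0.
  rewrite /v (_ : pm c0 = 0) ?col_mx0 ?mulmx0 //; solve_pm0.
have all0 k : v (b + 1 - k%:Z) = 0.
  elim: k => [|k IH]; first by rewrite subr0.
  rewrite step; last by lia.
  by rewrite (_ : b + 1 - k.+1%:Z + 1 = b + 1 - k%:Z) //; lia.
have vc : v (c + 1) = 0.
  by rewrite -(all0 (absz (b - c)%R)); congr v; lia.
have h1 : (pm r1 : 'M_(1, gdim (FA c d) c)) *m s c *m
     col_mx (pm c1 : 'M_(gdim (FA c b) c, 1)) (0 : 'M_(gdim (FA a d) c, 1)) = 0.
  rewrite -vc /v.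
  have -> : col_mx (pm c1 : 'M_(gdim (FA c b) c, 1)) (0 : 'M_(gdim (FA a d) c, 1)) =
      gX (grsum (FA c b) (FA a d)) c *m
      col_mx (pm c0 : 'M_(gdim (FA c b) (c + 1), 1)) (0 : 'M_(gdim (FA a d) (c + 1), 1)).
    rewrite gX_sum mul_block_col !mulmx0 !mul0mx !addr0 gXE (pm_mul pYXF); congr col_mx.
    solve_pm'.
  rewrite -mulmxA (mulmxA (s c)) (proj1 (hs c)) !mulmxA; congr (_ *m _ *m _).
  rewrite gXE (pm_mul r1F); solve_pm'.
have h2 : col_mx (pm c1 : 'M_(gdim (FA c b) c, 1)) (0 : 'M_(gdim (FA a d) c, 1)) =
    col_mx (pm peq) (- pm peq) *m (pm c1 : 'M_(gdim (FA c d) c, 1)).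
  rewrite mul_col_mx mulNmx !(pm_mul peqF); congr col_mx.
    solve_pm'.
  rewrite (_ : pm _ = 0) ?oppr0 //; solve_pm0.
move: h1; rewrite h2 mulmxA -(mulmxA (pm r1)) hsg mulmx1 (pm_mul r1F).
rewrite (_ : pm _ = pm (fun _ _ => true)); first exact: pm_true_neq0.
solve_pm'.
Qed.

Lemma nsplit2 (a b c d : int) : a < c -> c < b -> b < d ->
  ~ splits (A := FA c d) (B := grsum (FA a c) (FA b d)) (C := FA a b)
    (fun n => row_mx (pm pYX) (pm peq)) (fun n => col_mx (pm peq) (- pm pYX)).
Proof.
move=> ac cb bd [s [hs hsg]].
have ab : a < b by lia. have ad : a < d by lia. have cd : c < d by lia.
pose v n := (pm r0 : 'M_(1, gdim (FA a b) n)) *m s n *m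
   col_mx (0 : 'M_(gdim (FA a c) n, 1)) (pm c1 : 'M_(gdim (FA b d) n, 1)).
have step : v c = v (c + 1).
  rewrite /v.
  have -> : (pm r0 : 'M_(1, gdim (FA a b) c)) = pm r0 *m gY (FA a b) c.
    rewrite gYE (pm_mul r0F); solve_pm'.
  rewrite -!mulmxA (mulmxA (gY _ c)) (proj2 (hs c)) -!mulmxA.
  congr (_ *m (_ *m _)).
  rewrite gY_sum mul_block_col !mulmx0 !mul0mx !addr0 !add0r gYE (pm_mul peqF); congr col_mx.
  solve_pm'.
have vc1 : - v (c + 1) = pm (fun _ _ => true).
  rewrite /v -mulmxN.
  have -> : - col_mx (0 : 'M_(gdim (FA a c) (c + 1), 1)) (pm c1 : 'M_(gdim (FA b d) (c + 1), 1))
     = col_mx (pm peq) (- pm pYX) *m (pm c0 : 'M_(gdim (FA a b) (c + 1), 1)) by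
    rewrite mul_col_mx mulNmx (pm_mul peqF) (pm_mul pYXF) opp_col_mx oppr0;
    congr col_mx; [apply/esym; solve_pm0 | congr (- _); solve_pm'].
  rewrite mulmxA -(mulmxA (pm r0)) hsg mulmx1 (pm_mul r0F); solve_pm'.
have vc : v c = 0.
  rewrite /v.
  have -> : col_mx (0 : 'M_(gdim (FA a c) c, 1)) (pm c1 : 'M_(gdim (FA b d) c, 1)) =
      gX (grsum (FA a c) (FA b d)) c *m
      col_mx (0 : 'M_(gdim (FA a c) (c + 1), 1)) (pm c0 : 'M_(gdim (FA b d) (c + 1), 1)).
    rewrite gX_sum mul_block_col !mulmx0 !mul0mx !addr0 !add0r gXE (pm_mul pYXF); congr col_mx.
    solve_pm'.
  rewrite -mulmxA (mulmxA (s c)) (proj1 (hs c)) !mulmxA.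
  rewrite gXE (pm_mul r0F) (_ : pm _ = 0) ?mul0mx //; solve_pm0.
apply: pm_true_neq0; by rewrite -vc1 -step vc oppr0.
Qed.

Theorem lemma4p4 (a b c d : int) :
  a < c -> c < b -> b < d ->
  (exists (f : grhom (@farc CC a b) (grsum (@farc CC c b) (@farc CC a d)))
          (g : grhom (grsum (@farc CC c b) (@farc CC a d)) (@farc CC c d)),
      short_exact f g /\ ~ splits f g) /\
  (exists (f' : grhom (@farc CC c d) (grsum (@farc CC a c) (@farc CC b d)))
          (g' : grhom (grsum (@farc CC a c) (@farc CC b d)) (@farc CC a b)),
      short_exact f' g' /\ ~ splits f' g').
Proof.
move=> ac cb bd; split.
  exists (fun n => row_mx (pm peq) (pm peq)), (fun n => col_mx (pm peq) (- pm peq)).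
  by split; [exact: ses1 | exact: nsplit1].
exists (fun n => row_mx (pm pYX) (pm peq)), (fun n => col_mx (pm peq) (- pm pYX)).
by split; [exact: ses2 | exact: nsplit2].
Qed.
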